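(* For every even $n\ge0$, every integer $r\ge0$ and every graph $G$ of order $n$, the degree $d(G)$ is a non-negative integer, and there is a constant $C$ independent of $p$ such that $\mathcal A_r(G)\le C\,N^{-d(G)}$ for all $p\in(0,1)$; i.e. at fixed order $n$ the amplitude scales at most like $N^{-d(G)}$ as $N\to\infty$.
   Context: Fix $p\in(0,1)$ and $N:=1/(1-p)$. Trees. A 2-rooted ternary tree of order $n$ is a finite plane tree $U$ with a root vertex of degree 2 and $n$ true vertices of degree 4; each edge is internal or a leaf (half-edge). Each true vertex $v$ has parent edge $e_1(v)$ (towards the root) and ordered children edges $e_2(v),e_3(v),e_4(v)$. One root edge has type $\alpha$, the other $\bar\alpha$; if $e_1(v)$ has type $\tau$ then $e_2(v)$ has the other type and $e_3(v),e_4(v)$ have type $\tau$. Leaves of type $\alpha$ are leaves, of type $\bar\alpha$ anti-leaves ($n+1$ each). A heap-ordering labels true vertices bijectively by $\{1,\dots,n\}$, increasing from parent to child. Graphs. For even $n$, a graph of order $n$ is $G=(U,w,w')$: $U$ heap-ordered; $w$ a bijection leaves $\to$ anti-leaves (dashed edges; internal edges are solid); $w'$ a partition of true vertices into $n/2$ pairs (wavy edges) with, for each pair $\{v,v'\}$ ($v$ of smaller label), one of eight propagators in $(S,j,k)=(S_v,j_v,k_v)$, $(S',j',k')=(S_{v'},j_{v'},k_{v'})$: $\delta_{jj'}\delta_{kk'}$, $\delta_{j,S-j'}\delta_{kk'}$, $\delta_{jj'}\delta_{k,S-k'}$, $\delta_{j,S-j'}\delta_{k,S-k'}$, $\delta_{jk'}\delta_{kj'}$,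 $\delta_{j,S-k'}\delta_{kj'}$, $\delta_{jk'}\delta_{k,S-j'}$, $\delta_{j,S-k'}\delta_{k,S-j'}$, together with $S=S'$. Amplitude. A momentum attribution gives each true vertex $S_v\ge0$, $0\le j_v,k_v\le S_v$ and momenta $j_v,S_v-j_v,k_v,S_v-k_v$ to the ends at $v$ of $e_1,\dots,e_4$. For $r\in\mathbb N$ it is admissible if solid edges get equal momenta at both ends, both root edges carry momentum $r$, every dashed edge $e$ joins leaves of equal momentum $m(e)$, and every wavy edge satisfies $S_v=S_{v'}$ and its propagator. $\mathcal A_r(G):=N^{-n}\sum_{\text{admissible}}\prod_{e\text{ dashed}}p^{m(e)}$. Faces and degree. Call the edge-ends at true vertices and at the root slots ($2n+2$ slots). Each propagator of a wavy edge $\{v,v'\}$, together with $S=S'$, identifies each of $j,S-j,k,S-k$ of $v$ with one momentum of $v'$, hence pairs each slot of $v$ with a slot of $v'$; these four pairs are the corners of that wavy edge ($2n$ corners in all). Let $\Gamma$ be the graph on the set of slots whose edges are the solid and dashed edges of $G$, the corners, and one extra edge joining the two root slots; every slot has degree 2, and the connected components (cycles) of $\Gamma$ are the faces; $F(G)$ is their number. Let $E$ be the $(n/2)\times F(G)$ matrix with rows indexed by wavy edges $\omega=\{v,v'\}$ ($v$ of smaller label) and columns by faces, with $E_{\omega f}$ = (number of corners of $\omega$ lying in $f$ that contain $e_1(v)$ or $e_2(v)$) minus (number of corners of $\omega$ lying in $f$ that contain $e_3(v)$ or $e_4(v)$). Let $R(G)$ be the rank of $E$ ($0$ if $n=0$).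 The degree is $d(G):=n-F(G)+R(G)+1$. *)

(* Defs.v *)
From HB Require Import structures.
From mathcomp Require Import all_boot all_order all_algebra.
From mathcomp Require Import all_classical all_reals.
From mathcomp Require Import esum.
Set Implicit Arguments.
Unset Strict Implicit.
Unset Printing Implicit Defensive.
Import Order.TTheory GRing.Theory Num.Theory.

(* Encoding of a heap-ordered 2-rooted ternary tree of order n.             *)
(* True vertices are identified with their heap labels, shifted to 'I_n     *)
(* (label i+1 <-> i : 'I_n).                                                *)
(* A "position" is a place below which an edge hangs:                       *)
(*   inl 0  : the root edge of type alpha,                                  *)
(*   inl 1  : the root edge of type anti-alpha,                             *)
(*   inr (u, c) : the child edge e_{c+2}(u) of the true vertex u (c : 'I_3). *)
(* The tree is given by the map parent : v |-> position of e_1(v); a        *)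
(* position not of the form parent v is a leaf/anti-leaf (half-edge).       *)
Definition pos (n : nat) := ('I_2 + 'I_n * 'I_3)%type.

(* Slots: the edge-ends at the root (inl i, the root end of root edge i) and *)
(* at the true vertices (inr (v, i) is the end at v of e_{i+1}(v)).          *)
Definition slot (n : nat) := ('I_2 + 'I_n * 'I_4)%type.

Definition slot_of_pos n (p : pos n) : slot n :=
  match p with
  | inl i => inl i
  | inr (u, c) => inr (u, lift ord0 c)
  end.

Definition vslot n (v : 'I_n) (i : 'I_4) : slot n := inr (v, i).

(* Validity of a heap-ordered tree: each position carries at most one       *)
(* vertex (plane structure) and labels increase from parent to child.        *)
Definition tree_wf n (par : 'I_n -> pos n) : Prop :=
  injective par /\
  (forall (v u : 'I_n) (c : 'I_3), par v = inr (u, c) -> (u < v)%N).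

(* Type of the edge hanging at a position (true = alpha, false = anti-alpha), *)
(* computed by walking up to the root (fuel n.+1 suffices, labels decrease).  *)
Fixpoint ptype_f n (par : 'I_n -> pos n) (k : nat) (p : pos n) : bool :=
  match p with
  | inl i => i == ord0
  | inr (u, c) =>
      match k with
      | 0 => true
      | k'.+1 => let t := ptype_f par k' (par u) in
                 if c == ord0 then ~~ t else t
      end
  end.
Definition ptype n (par : 'I_n -> pos n) (p : pos n) : bool :=
  ptype_f par n.+1 p.

Definition occupied n (par : 'I_n -> pos n) (p : pos n) : bool :=
  [exists v, par v == p].
Definition is_leaf n (par : 'I_n -> pos n) (p : pos n) : bool :=
  ~~ occupied par p && ptype par p.
Definition is_antileaf n (par : 'I_n -> pos n) (p : pos n) : bool :=
  ~~ occupied par p && ~~ ptype par p.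

(* Graphs.  gw = dashed edges (leaves -> anti-leaves), gpartner = wavy      *)
(* pairing (fixed-point-free involution), gprop v = propagator index (0..7, *)
(* in the order of the paper) of the wavy edge {v, gpartner v}; it is only  *)
(* read at the vertex of smaller label.                                     *)
Record graph (n : nat) := Graph {
  gpar : 'I_n -> pos n;
  gw : pos n -> pos n;
  gpartner : 'I_n -> 'I_n;
  gprop : 'I_n -> 'I_8 }.

Definition graph_wf n (G : graph n) : Prop :=
  ~~ odd n /\
  tree_wf (gpar G) /\
  (forall p, is_leaf (gpar G) p -> is_antileaf (gpar G) (gw G p)) /\
  (forall p q, is_leaf (gpar G) p -> is_leaf (gpar G) q ->
      gw G p = gw G q -> p = q) /\
  (forall q, is_antileaf (gpar G) q ->
      exists2 p, is_leaf (gpar G) p & gw G p = q) /\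
  (forall v, gpartner G v != v /\ gpartner G (gpartner G v) = v).

(* wavy edges, indexed by their vertex of smaller label *)
Definition wavy n (G : graph n) : {set 'I_n} :=
  [set v : 'I_n | (v < gpartner G v)%N].

Definition prop_holds (i : 'I_8) (S j k S' j' k' : nat) : bool :=
  (S == S') &&
  match val i with
  | 0 => (j == j') && (k == k')
  | 1 => (j == S - j') && (k == k')
  | 2 => (j == j') && (k == S - k')
  | 3 => (j == S - j') && (k == S - k')
  | 4 => (j == k') && (k == j')
  | 5 => (j == S - k') && (k == j')
  | 6 => (j == k') && (k == S - j')
  | _ => (j == S - k') && (k == S - j')
  end.

(* The slot pairing (corners) induced by each propagator: slot a of v       *)
(* (a = 0,1,2,3 for momenta j, S-j, k, S-k) is paired with slot            *)
(* prop_corner i a of v'.                                                   *)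
Definition prop_corner (i : 'I_8) (a : 'I_4) : 'I_4 :=
  let l := match val i with
           | 0 => [:: 0; 1; 2; 3]
           | 1 => [:: 1; 0; 2; 3]
           | 2 => [:: 0; 1; 3; 2]
           | 3 => [:: 1; 0; 3; 2]
           | 4 => [:: 2; 3; 0; 1]
           | 5 => [:: 3; 2; 0; 1]
           | 6 => [:: 2; 3; 1; 0]
           | _ => [:: 3; 2; 1; 0]
           end%N in
  inord (nth 0%N l a).

Definition attribution (n : nat) := {ffun 'I_n -> nat * nat * nat}.

Definition aS n (a : attribution n) v := (a v).1.1.
Definition aj n (a : attribution n) v := (a v).1.2.
Definition ak n (a : attribution n) v := (a v).2.

Definition mom n (r : nat) (a : attribution n) (s : slot n) : nat :=
  match s with
  | inl _ => r
  | inr (v, i) =>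
      match val i with
      | 0 => aj a v
      | 1 => aS a v - aj a v
      | 2 => ak a v
      | _ => aS a v - ak a v
      end
  end.

Definition admissible n (G : graph n) (r : nat) (a : attribution n) : Prop :=
  (forall v, aj a v <= aS a v /\ ak a v <= aS a v)%N /\
  (* solid edges (including root edges leading to a true vertex) *)
  (forall v, mom r a (slot_of_pos (gpar G v)) = mom r a (vslot v ord0)) /\
  (forall p, is_leaf (gpar G) p ->
      mom r a (slot_of_pos p) = mom r a (slot_of_pos (gw G p))) /\
  (forall v, v \in wavy G ->
      prop_holds (gprop G v) (aS a v) (aj a v) (ak a v)
        (aS a (gpartner G v)) (aj a (gpartner G v)) (ak a (gpartner G v))).

Local Open Scope ring_scope.

Definition Nconst (R : realType) (p : R) : R := (1 - p)^-1.

(* amplitude A_r(G) = N^{-n} * sum over admissible attributions of          *)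
(* prod over dashed edges of p^{m(e)}; dashed edges <-> leaves.             *)
Definition amplitude (R : realType) (p : R) n (G : graph n) (r : nat)
  : \bar R :=
  ((Nconst p ^- n)%:E *
   \esum_(a in [set a : attribution n | admissible G r a])
      (\prod_(q : pos n | is_leaf (gpar G) q)
          p ^+ (mom r a (slot_of_pos q)))%:E)%E.

Definition gamma_adj n (G : graph n) (x y : slot n) : bool :=
  [exists v, (x == slot_of_pos (gpar G v)) && (y == vslot v 0)] ||
  [exists q, [&& is_leaf (gpar G) q, x == slot_of_pos q &
                 y == slot_of_pos (gw G q)]] ||
  [exists v, [exists i, [&& v \in wavy G, x == vslot v i &
                 y == vslot (gpartner G v) (prop_corner (gprop G v) i)]]] ||
  ((x == inl ord0) && (y == inl (lift ord0 ord0))).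

Definition gamma_rel n (G : graph n) : rel (slot n) :=
  fun x y => gamma_adj G x y || gamma_adj G y x.

Definition faces n (G : graph n) : {set {set slot n}} :=
  [set [set y | connect (gamma_rel G) x y] | x : slot n].

Definition nfaces n (G : graph n) : nat := #|faces G|.

Definition Ematrix n (G : graph n) : 'M[rat]_(#|wavy G|, #|faces G|) :=
  \matrix_(i, f)
    let v : 'I_n := enum_val (A := wavy G) i in
    let fc : {set slot n} := enum_val (A := faces G) f in
    ((#|[set b : 'I_4 | (b < 2)%N && (vslot v b \in fc)]|)%:R -
     (#|[set b : 'I_4 | (2 <= b)%N && (vslot v b \in fc)]|)%:R).

Definition Erank n (G : graph n) : nat := \rank (Ematrix G).

Definition degree n (G : graph n) : int :=
  (n%:Z - (nfaces G)%:Z + (Erank G)%:Z + 1)%R.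

(* Main.v *)
Require Import Defs.
From HB Require Import structures.
From mathcomp Require Import all_boot all_order all_algebra.
From mathcomp Require Import all_classical all_reals.
From mathcomp Require Import esum.
From mathcomp Require Import zify ring lra.
Set Implicit Arguments.
Unset Strict Implicit.
Unset Printing Implicit Defensive.
Import Order.TTheory GRing.Theory Num.Theory.
Local Open Scope ring_scope.

Ltac try_a := first [ (exists (@inord 3 0); apply: val_inj; by rewrite /prop_corner /= !inordK)
  | (exists (@inord 3 1); apply: val_inj; by rewrite /prop_corner /= !inordK)
  | (exists (@inord 3 2); apply: val_inj; by rewrite /prop_corner /= !inordK)
  | (exists (@inord 3 3); apply: val_inj; by rewrite /prop_corner /= !inordK)].

Lemma pc_surj (pi : 'I_8) (b : 'I_4) : exists a, prop_corner pi a = b.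
Proof.
case: pi => m hm; case: b => k hk.
do 8 (destruct m as [|m]; [do 4 (destruct k as [|k]; [try_a|]); done|]); done.
Qed.
Notation b0 := (@ord0 3).
Notation b1 := (lift b0 (@ord0 2)).
Notation b2 := (lift b0 (lift (@ord0 2) (@ord0 1))).
Notation b3 := (lift b0 (lift (@ord0 2) (lift (@ord0 1) (@ord0 0)))).

Section Faces.
Variables (n : nat) (G : graph n).

Lemma gamma_sym : symmetric (gamma_rel G).
Proof. by move=> x y; rewrite /gamma_rel orbC. Qed.

Definition fo (s : slot n) : {set slot n} := [set y | connect (gamma_rel G) s y].

Lemma fo_in s : fo s \in faces G.
Proof. by apply/imsetP; exists s. Qed.

Definition F := #|faces G|.
Definition fidx (s : slot n) : 'I_F := enum_rank_in (fo_in s) (fo s).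

Lemma enum_val_fidx s : enum_val (fidx s) = fo s.
Proof. by rewrite /fidx enum_rankK_in // fo_in. Qed.

Lemma fo_eq x y : connect (gamma_rel G) x y -> fo x = fo y.
Proof.
move=> cxy; apply/setP => z; rewrite !inE; apply/idP/idP.
  by move=> cxz; apply: connect_trans cxz; rewrite (sym_connect_sym gamma_sym).
by move=> cyz; apply: connect_trans cyz.
Qed.

Lemma in_face s (f : 'I_F) : (s \in enum_val (A := faces G) f) = (fidx s == f).
Proof.
have := enum_valP (A := faces G) f; move=> /imsetP [x _ ex].
apply/idP/eqP.
  rewrite ex inE => cxs; apply: enum_val_inj.
  by rewrite enum_val_fidx ex -/(fo x) (fo_eq cxs).
move=> <-; rewrite enum_val_fidx inE; exact: connect0.
Qed.

Lemma face_rep (f : 'I_F) : exists s, fidx s = f.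
Proof.
have := enum_valP (A := faces G) f; move=> /imsetP [x _ ex].
exists x; apply/eqP; rewrite -in_face ex inE; exact: connect0.
Qed.

Lemma fidx_adj x y : gamma_adj G x y -> fidx x = fidx y.
Proof.
move=> a; apply: enum_val_inj; rewrite !enum_val_fidx; apply: fo_eq.
by apply: connect1; rewrite /gamma_rel a.
Qed.

Lemma fidx_conn x y : connect (gamma_rel G) x y -> fidx x = fidx y.
Proof. by move=> c; apply: enum_val_inj; rewrite !enum_val_fidx; apply: fo_eq. Qed.

Definition xval (u : 'rV[rat]_F) (s : slot n) := u 0 (fidx s).

Lemma sum_delta (m : nat) (Fn : 'I_m -> rat) g :
  \sum_f Fn f * (g == f)%:R = Fn g.
Proof.
rewrite (bigD1 g) //= eqxx mulr1 big1 ?addr0 // => f /negPf.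
by rewrite eq_sym => ->; rewrite mulr0.
Qed.

Lemma card4 (P : 'I_4 -> bool) :
  #|[set b | P b]| = (P b0 + P b1 + P b2 + P b3)%N.
Proof.
rewrite -sum1_card big_mkcond /= !big_ord_recl big_ord0 /= !inE.
have e : forall b : 'I_4, (if P b then 1 else 0)%N = P b.
  by move=> b; case: (P b).
by rewrite !e addn0 !addnA.
Qed.

Lemma Erow (u : 'rV[rat]_F) (i : 'I_#|wavy G|) :
  let v := enum_val i in
  (u *m (Ematrix G)^T) 0 i =
   xval u (vslot v b0) + xval u (vslot v b1) - xval u (vslot v b2) - xval u (vslot v b3).
Proof.
move=> v; rewrite mxE.
under eq_bigr => f _ do rewrite mxE mxE /= !card4 /= !in_face.
rewrite /xval.
set f0 := fidx (vslot v b0); set f1 := fidx (vslot v b1).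
set f2 := fidx (vslot v b2); set f3 := fidx (vslot v b3).
have -> : \sum_f u 0 f * (((f0 == f) + (f1 == f) + false + false)%:R
     - ((false + false + (f2 == f) + (f3 == f))%:R)) =
  \sum_f (u 0 f * (f0 == f)%:R + u 0 f * (f1 == f)%:R
     - u 0 f * (f2 == f)%:R - u 0 f * (f3 == f)%:R).
  by apply: eq_bigr => f _; rewrite !addn0 !add0n !natrD; ring.
by rewrite !big_split /= !sumrN !sum_delta.
Qed.
End Faces.

Section Deg.
Variables (n : nat) (G : graph n).
Hypothesis hG : graph_wf G.
Local Notation xv := (@xval n G).

Lemma hpar_inj : injective (gpar G).
Proof. by case: hG => _ [[]]. Qed.
Lemma hheap v u c : gpar G v = inr (u, c) -> (u < v)%N.
Proof. by case: hG => _ [[_ h] _]; apply: h. Qed.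
Lemma hpart v : gpartner G v != v /\ gpartner G (gpartner G v) = v.
Proof. by case: hG => _ [_ [_ [_ [_ h]]]]. Qed.

Lemma nwavy_partner v : v \notin wavy G ->
  gpartner G v \in wavy G /\ (gpartner G v < v)%N.
Proof.
rewrite /wavy !inE -leqNgt => h; have [ne pp] := hpart v.
have lt : (gpartner G v < v)%N by rewrite ltn_neqAle h andbT; apply: contra ne => /eqP/val_inj ->.
by rewrite pp.
Qed.

Lemma wavy_partner v : v \in wavy G -> gpartner G v \notin wavy G.
Proof. by rewrite /wavy !inE (hpart v).2 -leqNgt => /ltnW. Qed.

Lemma adj_solid v : gamma_adj G (slot_of_pos (gpar G v)) (vslot v b0).
Proof.
rewrite /gamma_adj; apply/orP; left; apply/orP; left; apply/orP; left.
apply/existsP; exists v; rewrite eqxx /=; apply/eqP; congr vslot; exact: val_inj.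
Qed.

Lemma adj_dashed q : is_leaf (gpar G) q ->
  gamma_adj G (slot_of_pos q) (slot_of_pos (gw G q)).
Proof.
move=> lq; rewrite /gamma_adj; apply/orP; left; apply/orP; left; apply/orP; right.
by apply/existsP; exists q; rewrite lq !eqxx.
Qed.

Lemma adj_corner v i : v \in wavy G ->
  gamma_adj G (vslot v i) (vslot (gpartner G v) (prop_corner (gprop G v) i)).
Proof.
move=> vw; rewrite /gamma_adj; apply/orP; left; apply/orP; right.
by apply/existsP; exists v; apply/existsP; exists i; rewrite vw !eqxx.
Qed.

Lemma adj_root : gamma_adj G (inl ord0) (inl (lift ord0 ord0)).
Proof. by rewrite /gamma_adj !eqxx !orbT. Qed.

Definition colslot (c : 'I_n.+1) : slot n :=
  match unlift ord0 c with
  | None => inl ord0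
  | Some v => if v \in wavy G then vslot v b1 else vslot (gpartner G v) b2
  end.

Definition Pi : 'M[rat]_(F G, n.+1) := \matrix_(f, c) (fidx G (colslot c) == f)%:R.

Lemma mulPi u c : (u *m Pi) 0 c = xv u (colslot c).
Proof.
rewrite mxE; under eq_bigr => f _ do rewrite mxE.
by rewrite sum_delta.
Qed.

Lemma xval_root1 u : xv u (inl (lift ord0 ord0)) = xv u (inl ord0).
Proof. by rewrite /xval (fidx_adj adj_root). Qed.

Lemma kerinj (u : 'rV[rat]_(F G)) : u *m (Ematrix G)^T = 0 -> u *m Pi = 0 -> u = 0.
Proof.
move=> hE hP.
have hc : forall c, xv u (colslot c) = 0.
  by move=> c; rewrite -mulPi hP mxE.
have hr : forall i, xv u (inl i) = 0.
  move=> i; have : i = ord0 \/ i = lift ord0 ord0.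
    by case: i => [[|[|//]] ?]; [left|right]; apply: val_inj.
  by case=> ->; [|rewrite xval_root1]; have := hc ord0; rewrite /colslot unlift_none; apply.
have hv : forall k (v : 'I_n), (v < k)%N -> forall b, xv u (vslot v b) = 0.
  elim=> [//|k IH] v; rewrite ltnS leq_eqVlt => /orP [/eqP vk|]; last exact: IH.
  have IH' : forall w : 'I_n, (w < v)%N -> forall b, xv u (vslot w b) = 0.
    by move=> w; rewrite vk; apply: IH.
  have x0 : xv u (vslot v b0) = 0.
    rewrite /xval -(fidx_adj (adj_solid v)) -/(xv u _).
    case e: (gpar G v) => [i|[w c]] /=; first exact: hr.
    by apply: IH'; apply: hheap e.
  case vw: (v \in wavy G).
    have x1 : xv u (vslot v b1) = 0.
      by have := hc (lift ord0 v); rewrite /colslot liftK vw.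
    have x2 : xv u (vslot v b2) = 0.
      have := hc (lift ord0 (gpartner G v)); rewrite /colslot liftK.
      by rewrite (negPf (wavy_partner vw)) (hpart v).2.
    have x3 : xv u (vslot v b3) = 0.
      have := Erow u (enum_rank_in vw v).
      rewrite enum_rankK_in // hE mxE => /= H.
      rewrite x0 x1 x2 in H; lra.
    move=> b; have : b = b0 \/ b = b1 \/ b = b2 \/ b = b3.
      by case: b => [[|[|[|[|//]]]] ?]; [left|right;left|right;right;left|right;right;right]; apply: val_inj.
    by case=> [->|[->|[->|->]]].
  have [ww wlt] := nwavy_partner (negbT vw).
  move=> b; have [a <-] := pc_surj (gprop G (gpartner G v)) b.
  rewrite /xval; have := fidx_adj (adj_corner a ww); rewrite (hpart v).2 => <-.
  exact: IH'.
apply/rowP => f; rewrite mxE; have [s <-] := face_rep f.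
rewrite -/(xv u s); case: s => [i|[v b]]; first exact: hr.
exact: (hv n v (ltn_ord v)).
Qed.

Lemma rankK_le : (\rank (kermx (Ematrix G)^T) <= n.+1)%N.
Proof.
set K := kermx _.
rewrite -(mxrank_mul_ker K Pi).
have -> : (K :&: kermx Pi)%MS = 0.
  apply/row_matrixP => i; rewrite row0; apply: kerinj.
    by apply/sub_kermxP; apply: submx_trans (row_sub i _) _; rewrite capmxSl.
  by apply/sub_kermxP; apply: submx_trans (row_sub i _) _; rewrite capmxSr.
by rewrite mxrank0 addn0 rank_leq_col.
Qed.

Lemma degree_ge0 : (0 <= degree G)%R.
Proof.
have h := rankK_le; rewrite mxrank_ker mxrank_tr in h.
have hR : (Erank G <= nfaces G)%N by apply: rank_leq_col.
rewrite /degree; move: h hR; rewrite /Erank /nfaces /F.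
lia.
Qed.

End Deg.

Lemma geom_le (R : realFieldType) (x : R) M : 0 <= x -> x < 1 ->
  \sum_(t < M) x ^+ t <= (1 - x)^-1.
Proof.
move=> x0 x1.
have h : (1 - x) * \sum_(t < M) x ^+ t = 1 - x ^+ M.
  by rewrite -opprB mulNr -subrX1 opprB.
have p : 0 < 1 - x by rewrite subr_gt0.
rewrite -(ler_pM2l p) h mulfV ?gtr_eqF //; have := exprn_ge0 M x0; lra.
Qed.

Lemma floor_sum_eq (R : realFieldType) (x : R) c M : (0 < c)%N ->
  \sum_(t < c * M) x ^+ (t %/ c) = c%:R * \sum_(s < M) x ^+ s.
Proof.
move=> c0; elim: M => [|M IH]; first by rewrite muln0 !big_ord0 mulr0.
rewrite mulnS addnC big_split_ord /= IH big_ord_recr /= mulrDr.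
congr (_ + _).
under eq_bigr => i _ do rewrite /= mulnC divnMDl // divn_small // addn0.
by rewrite sumr_const card_ord mulr_natl.
Qed.

Lemma floor_sum_le (R : realFieldType) (x : R) c M : (0 < c)%N -> 0 <= x ->
  \sum_(t < M) x ^+ (t %/ c) <= c%:R * \sum_(s < M) x ^+ s.
Proof.
move=> c0 x0; rewrite -floor_sum_eq //.
rewrite (big_ord_widen (c * M) (fun t => x ^+ (t %/ c))); last by rewrite leq_pmull.
rewrite [X in _ <= X](bigID (fun i : 'I_(c * M) => (i < M)%N)) /= lerDl.
by apply: sumr_ge0 => i _; apply: exprn_ge0.
Qed.

Definition momv (S j k b : nat) : nat :=
  match b with 0 => j | 1 => S - j | 2 => k | _ => S - k end.

Lemma corner_mom (pi : 'I_8) (i : 'I_4) S j k S' j' k' :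
  (j <= S)%N -> (k <= S)%N -> (j' <= S')%N -> (k' <= S')%N ->
  prop_holds pi S j k S' j' k' ->
  momv S j k i = momv S' j' k' (prop_corner pi i).
Proof.
move=> h1 h2 h3 h4; case: pi => m hm; case: i => b hb.
do 8 (destruct m as [|m]; [do 4 (destruct b as [|b];
  [rewrite /prop_corner /= inordK //= /prop_holds /= => /andP [/eqP eS /andP [/eqP e1 /eqP e2]]; lia|]); done|]); done.
Qed.

Section Amp.
Variables (n : nat) (G : graph n) (r : nat).
Hypothesis hG : graph_wf G.
Local Notation xv := (@xval n G).

Lemma mom_vslot (a : attribution n) v (i : 'I_4) :
  mom r a (vslot v i) = momv (aS a v) (aj a v) (ak a v) i.
Proof. by rewrite /mom /vslot /momv; case: i => [[|[|[|[|//]]]] ?]. Qed.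

Lemma adj_mom (a : attribution n) x y : admissible G r a -> gamma_adj G x y -> mom r a x = mom r a y.
Proof.
case=> hb [hs [hd hw]].
rewrite /gamma_adj => /orP [/orP [/orP [|]|]|].
- move=> /existsP [v /andP [/eqP -> /eqP ->]].
  by rewrite hs.
- by move=> /existsP [q /and3P [lq /eqP -> /eqP ->]]; apply: hd.
- move=> /existsP [v /existsP [i /and3P [vw /eqP -> /eqP ->]]].
  rewrite !mom_vslot; apply: corner_mom; try by case: (hb v).
    by case: (hb (gpartner G v)).
    by case: (hb (gpartner G v)).
  exact: hw.
- by move=> /andP [/eqP -> /eqP ->].
Qed.

Lemma conn_mom (a : attribution n) x y : admissible G r a -> connect (gamma_rel G) x y ->
  mom r a x = mom r a y.
Proof.
move=> ha /connectP [p pth ->]; elim: p x pth => [//|z p IH] x /= /andP [hxz pth].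
rewrite -(IH z pth); case/orP: hxz => h; first exact: adj_mom.
by apply/esym; apply: adj_mom.
Qed.

Lemma fidx_conn' x y : fidx G x = fidx G y -> connect (gamma_rel G) x y.
Proof.
move=> e; have : y \in fo G x.
  by rewrite -enum_val_fidx e enum_val_fidx inE connect0.
by rewrite inE.
Qed.

Definition rep (f : 'I_(F G)) : slot n := odflt (inl ord0) [pick s | fidx G s == f].

Lemma rep_spec f : fidx G (rep f) = f.
Proof.
rewrite /rep; case: pickP => [s /eqP //|h].
by have [s e] := face_rep f; move: (h s); rewrite e eqxx.
Qed.

Definition mvec (a : attribution n) : 'rV[rat]_(F G) := \row_f (mom r a (rep f))%:R.

Lemma xval_mvec (a : attribution n) s : admissible G r a -> xv (mvec a) s = (mom r a s)%:R.
Proof.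
move=> ha; rewrite /xval mxE; congr (_%:R); apply: conn_mom => //.
by apply: fidx_conn'; rewrite rep_spec.
Qed.

Definition Emat := (Ematrix G)^T.

Lemma mvec_ker (a : attribution n) : admissible G r a -> mvec a *m Emat = 0.
Proof.
move=> ha; apply/rowP => i; rewrite Erow /= !xval_mvec // !mom_vslot /= mxE.
set v := enum_val i; case: ha => hb _; case: (hb v) => h1 h2.
by rewrite !natrB //; ring.
Qed.

Definition onevec : 'rV[rat]_(F G) := const_mx 1.

Lemma onevec_ker : onevec *m Emat = 0.
Proof. by apply/rowP => i; rewrite Erow /xval !mxE; ring. Qed.

Definition Pr : 'M[rat]_(F G, 1) := \matrix_(f, c) (fidx G (inl ord0) == f)%:R.

Lemma mulPr u : (u *m Pr) 0 0 = xv u (inl ord0).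
Proof.
rewrite mxE; under eq_bigr => f _ do rewrite mxE.
by rewrite sum_delta.
Qed.

Definition K := kermx Emat.
Definition K0 := (K :&: kermx Pr)%MS.

Lemma rankK0 : (\rank K0 < \rank K)%N.
Proof.
rewrite -(mxrank_mul_ker K Pr) -/K0 -addn1 addnC leq_add2r lt0n mxrank_eq0.
apply/negP => /eqP h0.
have : (onevec *m Pr <= K *m Pr)%MS by apply: submxMr; apply/sub_kermxP; exact: onevec_ker.
rewrite h0 => /submx0null /matrixP /(_ 0 0).
by rewrite mulPr /xval !mxE.
Qed.


Definition mf := maxrankfun K0^T.
Definition Dm := \rank K0^T.

Definition Pf : 'M[rat]_(F G, Dm) := \matrix_(x, i) (x == mf i)%:R.

Lemma K0Pf : K0 *m Pf = (rowsub mf K0^T)^T.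
Proof.
apply/matrixP => y i; rewrite !mxE.
under eq_bigr => x _ do rewrite /Pf mxE eq_sym.
by rewrite sum_delta.
Qed.

Lemma K0_inj (u : 'rV[rat]_(F G)) : (u <= K0)%MS -> (forall i, u 0 (mf i) = 0) -> u = 0.
Proof.
move=> uK hu.
have hr : \rank (K0 *m Pf) = \rank K0.
  by rewrite K0Pf mxrank_tr eq_maxrowsub mxrank_tr.
have := mxrank_mul_ker K0 Pf; rewrite hr -{2}(addn0 (\rank K0)) => /eqP.
rewrite eqn_add2l mxrank_eq0 => /eqP h0.
apply/eqP; rewrite -submx0 -h0 sub_capmx uK /=.
apply/sub_kermxP/rowP => i; rewrite !mxE.
under eq_bigr => x _ do rewrite /Pf mxE.
by rewrite (bigD1 (mf i)) //= eqxx mulr1 hu add0r big1 // => x /negPf ->; rewrite mulr0.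
Qed.

Definition gvec (a : attribution n) (i : 'I_Dm) : nat := mom r a (rep (mf i)).

Lemma attr_eq (a a' : attribution n) : admissible G r a -> admissible G r a' ->
  (forall s, mom r a s = mom r a' s) -> a = a'.
Proof.
move=> [hb _] [hb' _] hm; apply/ffunP => v.
have := hm (vslot v b0); have := hm (vslot v b1); have := hm (vslot v b2).
rewrite !mom_vslot /momv /=.
case: (hb v) (hb' v); rewrite /aS /aj /ak.
case: (a v) => [[S j] k]; case: (a' v) => [[S' j'] k'] /= h1 h2 [h3 h4] e1 e2 e3.
have eS : S = S' by lia.
by rewrite eS e1 e3.
Qed.

Lemma g_inj (a a' : attribution n) : admissible G r a -> admissible G r a' ->
  (forall i, gvec a i = gvec a' i) -> a = a'.
Proof.
move=> ha ha' hg.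
have hK : forall b : attribution n, admissible G r b ->
    ((mvec b - r%:R *: onevec) *m Emat = 0).
  move=> b hb.
  by rewrite mulmxBl -scalemxAl onevec_ker mvec_ker // scaler0 subr0.
have hP : forall b : attribution n, admissible G r b ->
    ((mvec b - r%:R *: onevec) *m Pr = 0).
  move=> b hb; apply/rowP => j; rewrite ord1 mulPr mxE.
  rewrite /xval !mxE (@conn_mom b _ (inl ord0)) //; last by apply: fidx_conn'; rewrite rep_spec.
  by rewrite mulr1 subrr.
have h0 : mvec a - mvec a' = 0.
  apply: K0_inj.
    have -> : mvec a - mvec a' = (mvec a - r%:R *: onevec) - (mvec a' - r%:R *: onevec).
      by rewrite opprB addrA subrK.
    rewrite sub_capmx; apply/andP; split.
      by apply/sub_kermxP; rewrite mulmxBl !hK // subrr.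
    by apply/sub_kermxP; rewrite mulmxBl !hP // subrr.
  by move=> i; rewrite !mxE; move: (hg i); rewrite /gvec => ->; rewrite subrr.
apply: attr_eq => // s.
move/eqP: h0; rewrite subr_eq0 => /eqP h0.
have := xval_mvec s ha; rewrite h0 xval_mvec // => /eqP.
by rewrite eqr_nat => /eqP.
Qed.


Definition Lsum (a : attribution n) : nat :=
  \sum_(q : pos n | is_leaf (gpar G) q) mom r a (slot_of_pos q).

Lemma leaf_le (a : attribution n) q : is_leaf (gpar G) q ->
  (mom r a (slot_of_pos q) <= Lsum a)%N.
Proof. by move=> lq; rewrite /Lsum (bigD1 q) //= leq_addr. Qed.

Lemma unocc_le (a : attribution n) q : admissible G r a ->
  ~~ occupied (gpar G) q -> (mom r a (slot_of_pos q) <= Lsum a)%N.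
Proof.
move=> ha oq; case pq: (ptype (gpar G) q).
  by apply: leaf_le; rewrite /is_leaf oq pq.
have alq : is_antileaf (gpar G) q by rewrite /is_antileaf oq pq.
case: hG => _ [_ [_ [_ [h5 _]]]]; have [p lp <-] := h5 q alq.
case: ha => _ [_ [hd _]]; rewrite -hd //; exact: leaf_le.
Qed.

Lemma child_le (a : attribution n) (v : 'I_n) (c : 'I_3) B :
  admissible G r a -> (Lsum a <= B)%N ->
  (forall u : 'I_n, (v < u)%N -> (aS a u <= B)%N) ->
  (mom r a (slot_of_pos (inr (v, c))) <= B)%N.
Proof.
move=> ha hL hu; case oq: (occupied (gpar G) (inr (v, c))); last first.
  by apply: leq_trans hL; apply: unocc_le => //; rewrite oq.
move/existsP: oq => [u /eqP e].
have vu : (v < u)%N by apply: (hheap hG e).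
case: (ha) => hb [hs _]; rewrite -e hs /= /vslot /mom /=.
by apply: leq_trans (hu u vu); case: (hb u).
Qed.

Lemma S_le (a : attribution n) : admissible G r a ->
  forall v : 'I_n, (aS a v <= 2 ^ (n - v) * Lsum a)%N.
Proof.
move=> ha.
suff H : forall k (v : 'I_n), (n - v <= k)%N -> (aS a v <= 2 ^ (n - v) * Lsum a)%N.
  by move=> v; apply: (H n); apply: leq_subr.
elim=> [|k IH] v hk.
  by have := ltn_ord v; rewrite -subn_gt0; move: hk; rewrite leqn0 => /eqP ->.
have hv := ltn_ord v.
have e : (2 ^ (n - v) = 2 * 2 ^ (n - v.+1))%N.
  by rewrite -expnS subnSK.
have hB : forall u : 'I_n, (v < u)%N -> (aS a u <= 2 ^ (n - v.+1) * Lsum a)%N.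
  move=> u vu; apply: leq_trans (IH u _) _.
    by move: hk vu (ltn_ord u); lia.
  rewrite leq_mul2r; apply/orP; right; rewrite leq_exp2l //; move: vu; lia.
have hL : (Lsum a <= 2 ^ (n - v.+1) * Lsum a)%N.
  by rewrite leq_pmull // expn_gt0.
have c1 := child_le (@Ordinal 3 1 isT) ha hL hB.
have c2 := child_le (@Ordinal 3 2 isT) ha hL hB.
move: c1 c2; rewrite /slot_of_pos /mom /=.
case: ha => hb _; case: (hb v) => _ hk'.
rewrite e -mulnA; move: (2 ^ (n - v.+1) * Lsum a)%N => X; lia.
Qed.

Lemma mom_le (a : attribution n) s : admissible G r a ->
  (mom r a s <= 2 ^ n * Lsum a + r)%N.
Proof.
move=> ha; case: s => [i|[v b]]; first by rewrite /mom leq_addl.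
apply: leq_trans (leq_addr _ _).
apply: (@leq_trans (aS a v)).
  by case: ha => hb _; case: (hb v) => h1 h2; rewrite /mom; case: (val b) => [|[|[|]]] /=; rewrite ?leq_subr.
apply: leq_trans (S_le ha v) _; rewrite leq_mul2r leq_exp2l // leq_subr orbT //.
Qed.


Definition cc := (Dm * 2 ^ n).+1.

Lemma exp_bound (a : attribution n) : admissible G r a ->
  (\sum_i (gvec a i %/ cc) <= Lsum a + r)%N.
Proof.
move=> ha.
have h1 : (cc * \sum_i (gvec a i %/ cc) <= \sum_i gvec a i)%N.
  rewrite big_distrr /=; apply: leq_sum => i _.
  by rewrite mulnC leq_trunc_div.
have h2 : (\sum_i gvec a i <= Dm * (2 ^ n * Lsum a + r))%N.
  apply: (@leq_trans (\sum_(i < Dm) (2 ^ n * Lsum a + r))%N).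
    by apply: leq_sum => i _; apply: mom_le.
  by rewrite sum_nat_const card_ord.
have h3 : (Dm * (2 ^ n * Lsum a + r) <= cc * (Lsum a + r))%N.
  rewrite /cc; have : (0 < 2 ^ n)%N by rewrite expn_gt0.
  move: (2 ^ n)%N => X hX; nia.
by rewrite -(@leq_pmul2l cc) // (leq_trans h1 (leq_trans h2 h3)).
Qed.

Lemma term_bound (R : realType) (p q : R) (a : attribution n) :
  0 < p -> p <= q -> 2^-1 <= q -> q <= 1 -> admissible G r a ->
  p ^+ Lsum a <= 2 ^+ r * \prod_i q ^+ (gvec a i %/ cc).
Proof.
move=> p0 pq q2 q1 ha.
have q0 : 0 <= q by apply: le_trans pq; apply: ltW.
apply: (@le_trans _ _ (q ^+ Lsum a)).
  by apply: lerXn2r => //; rewrite nnegrE ltW.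
rewrite prodrXr.
apply: (@le_trans _ _ (2 ^+ r * q ^+ (Lsum a + r))); last first.
  apply: ler_wpM2l; first exact: exprn_ge0.
  by apply: ler_wiXn2l => //; apply: exp_bound.
rewrite exprD mulrCA -exprMn ler_peMr //; first exact: exprn_ge0.
apply: exprn_ege1; lra.
Qed.


Lemma uniq_sum_le (R : realType) (T : finType) (l : seq T) (H : T -> R) :
  uniq l -> (forall z, 0 <= H z) -> \sum_(z <- l) H z <= \sum_z H z.
Proof.
move=> ul H0; rewrite big_uniq // [X in _ <= X](bigID (fun z => z \in l)) /= lerDl.
by apply: sumr_ge0.
Qed.

Lemma fin_bound (R : realType) (p q : R) (s : seq (attribution n)) :
  0 < p -> p <= q -> 2^-1 <= q -> q < 1 -> uniq s ->
  (forall a, a \in s -> admissible G r a) ->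
  \sum_(a <- s) p ^+ Lsum a <= 2 ^+ r * (cc%:R * (1 - q)^-1) ^+ Dm.
Proof.
move=> p0 pq q2 q1 us hs.
have q0 : 0 <= q by apply: le_trans pq; apply: ltW.
pose H (y : 'I_Dm -> nat) := \prod_i q ^+ (y i %/ cc).
apply: (@le_trans _ _ (\sum_(a <- s) 2 ^+ r * H (gvec a))).
  rewrite big_seq_cond [X in _ <= X]big_seq_cond; apply: ler_sum => a /andP [ain _].
  by apply: term_bound => //; [apply: ltW|apply: hs].
rewrite -mulr_sumr; apply: ler_wpM2l; first exact: exprn_ge0.
pose M := (\sum_(a <- s) \sum_i gvec a i).+1.
have hM : forall a, a \in s -> forall i, (gvec a i < M)%N.
  move=> a ain i; rewrite ltnS (bigD1_seq a) //= (bigD1 i) //= -addnA.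
  exact: leq_addr.
pose toC (a : attribution n) : {ffun 'I_Dm -> 'I_M} := [ffun i => inord (gvec a i)].
pose H' (z : {ffun 'I_Dm -> 'I_M}) := \prod_i q ^+ (val (z i) %/ cc).
have e1 : \sum_(a <- s) H (gvec a) = \sum_(z <- map toC s) H' z.
  rewrite big_map; apply: eq_big_seq => a ain; rewrite /H /H'.
  by apply: eq_bigr => i _; rewrite /toC ffunE /= inordK // hM.
have ui : uniq (map toC s).
  rewrite map_inj_in_uniq // => a a' ain ain' e.
  apply: g_inj; try exact: hs.
  move=> i; have := congr1 (fun z : {ffun 'I_Dm -> 'I_M} => val (z i)) e; rewrite /toC /= !ffunE /= !inordK //; exact: hM.
rewrite e1; apply: le_trans (@uniq_sum_le _ _ _ H' ui _) _.
  by move=> z; apply: prodr_ge0 => i _; apply: exprn_ge0.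
rewrite /H' -(bigA_distr_bigA (fun (i : 'I_Dm) (t : 'I_M) => q ^+ (val t %/ cc))) /=.
rewrite (_ : _ ^+ Dm = \prod_(i < Dm) (cc%:R / (1 - q))); last by rewrite prodr_const card_ord.
apply: ler_prod => i _.
apply/andP; split; first by apply: sumr_ge0 => t _; apply: exprn_ge0.
apply: le_trans; first by apply: floor_sum_le.
rewrite ler_wpM2l //; exact: geom_le.
Qed.

End Amp.

Unset Implicit Arguments.
Set Strict Implicit.

Theorem proposition1 (R : realType) (n : nat) (G : graph n) (r : nat) :
  graph_wf G ->
  (0 <= degree G)%R /\
  exists C : R, forall p : R, 0 < p < 1 ->
    (amplitude p G r <= (C * Nconst p ^ (- degree G))%:E)%E.
Proof.
move=> hG; split; first exact: degree_ge0.
set D := Dm G. set c := cc G.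
exists (2 ^+ r * (c%:R * 2) ^+ D) => p /andP [p0 p1].
set q : R := if p <= 2^-1 then 2^-1 else p.
have pq : p <= q by rewrite /q; case: ifP => // /negbT; rewrite -ltNge => /ltW.
have q2 : 2^-1 <= q by rewrite /q; case: ifP => // /negbT; rewrite -ltNge => /ltW.
have q1 : q < 1 by rewrite /q; case: ifP => // _; lra.
set N := Nconst p.
have N1 : 1 < N by rewrite /N /Nconst invf_gt1; lra.
have hq : (1 - q)^-1 <= 2 * N.
  rewrite /N /Nconst -[2 * _]invrK invfM lef_pV2 ?posrE; rewrite ?invrK.
  - by rewrite /q; case: ifP => h; lra.
  - lra.
  - lra.
have hesum : (\esum_(a in [set a : attribution n | admissible G r a])
      (\prod_(q0 : pos n | is_leaf (gpar G) q0) p ^+ (mom r a (slot_of_pos q0)))%:E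
    <= (2 ^+ r * (c%:R * (1 - q)^-1) ^+ D)%:E)%E.
  apply: ereal.ge_ereal_sup => _ [X [finX XA] <-].
  rewrite fsbig_finite //= sumEFin lee_fin.
  under eq_bigr => a _ do rewrite prodrXr -/(Lsum G r a).
  apply: fin_bound => //; first exact: finmap.fset_uniq.
  move=> a; rewrite in_fset_set // => ain; apply: XA; move: ain; by rewrite inE.
have hdeg : exists k, - degree G = (D + k)%:Z - n%:Z.
  have h1 := rankK0 G.
  rewrite /K mxrank_ker /Emat mxrank_tr in h1.
  have h2 : D = \rank (K0 G) by rewrite /D /Dm mxrank_tr.
  have hR : (Erank G <= nfaces G)%N by apply: rank_leq_col.
  exists (nfaces G - Erank G - 1 - D)%N.
  rewrite /degree; move: h1 hR; rewrite -h2 /Erank /nfaces /F.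
  lia.
have [k ek] := hdeg.
have hN0 : N \is a GRing.unit by rewrite unitfE; lra.
have eN : N ^ (- degree G) = N ^+ (D + k) * N ^- n.
  by rewrite ek exprzDr // exprnN.
rewrite /amplitude -/N eN.
have Nge0 : 0 <= N by apply: ltW; apply: lt_trans N1; apply: ltr01.
have N0 : 0 <= N ^- n by rewrite invr_ge0 exprn_ge0.
apply: le_trans (lee_wpmul2l _ hesum) _; first by rewrite lee_fin.
rewrite -EFinM lee_fin.
apply: (@le_trans _ _ (N ^- n * (2 ^+ r * ((c%:R * 2) ^+ D * N ^+ (D + k))))); last first.
  have gen : forall x y z w : R, z * (w * (x * y)) = w * x * (y * z).
    by move=> x y z w; rewrite [z * _]mulrC !mulrA.
  by rewrite gen.
apply: ler_wpM2l => //; apply: ler_wpM2l; first exact: exprn_ge0.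
have c0 : (0 : R) <= c%:R by [].
have iq : 0 <= (1 - q)^-1 by rewrite invr_ge0 subr_ge0 ltW.
apply: (@le_trans _ _ ((c%:R * 2 * N) ^+ D)).
  apply: lerXn2r; rewrite ?nnegrE; first exact: mulr_ge0.
    by apply: mulr_ge0; [apply: mulr_ge0|].
  by rewrite -mulrA ler_wpM2l.
rewrite exprMn ler_wpM2l //; first by apply: exprn_ge0; apply: mulr_ge0.
by rewrite ler_eXn2l // leq_addr.
Qed.
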